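(* Let $F$ be a safe sentence and let $\mathbf c$ be a nonempty finite set of object constants containing every object constant occurring in $F$. Then the equivalence $\mathrm{Ground}_{\mathbf c}[F]\leftrightarrow F$ is derivable from $\mathit{SPP}_{\mathbf c}$ in $\mathbf{INT}^=+\mathrm{DE}$.
   Context: Formulas are first-order formulas over a signature with object constants, predicate constants and equality, but no function constants of arity $>0$. The primitive connectives are $\bot,\land,\lor,\rightarrow$ and the quantifiers $\forall,\exists$; $\neg F$ abbreviates $F\rightarrow\bot$, $\top$ abbreviates $\bot\rightarrow\bot$, $F\leftrightarrow G$ abbreviates $(F\rightarrow G)\land(G\rightarrow F)$. A sentence is a formula without free variables. Restricted variables: for quantifier-free $G$, $\mathrm{RV}(G)$ is: $\emptyset$ if $G$ is an equality between two variables; the set of variables of $G$ if $G$ is any other atomic formula; $\mathrm{RV}(\bot)=\emptyset$; $\mathrm{RV}(G\land H)=\mathrm{RV}(G)\cup\mathrm{RV}(H)$; $\mathrm{RV}(G\lor H)=\mathrm{RV}(G)\cap\mathrm{RV}(H)$; $\mathrm{RV}(G\rightarrow H)=\emptyset$. An occurrence of a subformula or variable in a formula is positive if the number of implications containing it in their antecedent is even, negative otherwise, and strictly positive if it is in the antecedent of no implication. A prenex sentence $Q_1x_1\cdots Q_nx_nM$ ($M$ quantifier-free, $x_i$ distinct) is semi-safe if every strictly positive occurrence of every $x_i$ in $M$ belongs to a subformula $G\rightarrow H$ with $x_i\in\mathrm{RV}(G)$. Simplification transformations: $\neg\bot\mapsto\top$, $\neg\top\mapsto\bot$; $\bot\land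 G\mapsto\bot$, $G\land\bot\mapsto\bot$, $\top\land G\mapsto G$, $G\land\top\mapsto G$; $\bot\lor G\mapsto G$, $G\lor\bot\mapsto G$, $\top\lor G\mapsto\top$, $G\lor\top\mapsto\top$; $\bot\rightarrow G\mapsto\top$, $G\rightarrow\top\mapsto\top$, $\top\rightarrow G\mapsto G$. A variable $x$ is positively (resp. negatively) weakly restricted in a quantifier-free formula $G$ if the formula obtained from $G$ by first replacing every atomic formula $A$ of $G$ with $x\in\mathrm{RV}(A)$ by $\bot$ and then applying the simplification transformations is $\top$ (resp. $\bot$). A semi-safe prenex sentence $Q_1x_1\cdots Q_nx_nM$ is safe if for every occurrence of every variable $x_i$: (a) if $Q_i=\forall$, the occurrence belongs to a positive subformula (of the sentence) in which $x_i$ is positively weakly restricted, or to a negative subformula in which $x_i$ is negatively weakly restricted; (b) if $Q_i=\exists$, the occurrence belongs to a negative subformula in which $x_i$ is positively weakly restricted, or to a positive subformula in which $x_i$ is negatively weakly restricted. For a finite set $\mathbf c$ of object constants, $\mathit{in}_{\mathbf c}(x_1,\dots,x_m)$ is $\bigwedge_{1\le j\le m}\bigvee_{c\in\mathbf c}x_j=c$, and $\mathit{SPP}_{\mathbf c}$ is the conjunction of $\forall\mathbf x(p_i(\mathbf x)\rightarrow\mathit{in}_{\mathbf c}(\mathbf x))$ over all predicate constants $p_i$ occurring in $F$. For a prenex sentence $F$ and nonempty finite $\mathbf c$, $\mathrm{Ground}_{\mathbf c}[F]$ is: $F$ if $F$ is quantifier-free; $\mathrm{Ground}_{\mathbf c}[\forall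 xG(x)]=\bigwedge_{c\in\mathbf c}\mathrm{Ground}_{\mathbf c}[G(c)]$; $\mathrm{Ground}_{\mathbf c}[\exists xG(x)]=\bigvee_{c\in\mathbf c}\mathrm{Ground}_{\mathbf c}[G(c)]$. $\mathbf{INT}^=$ is intuitionistic predicate logic with equality, and $\mathrm{DE}$ is the decidable equality axiom $x=y\lor x\neq y$. *)

(* Defs.v *)
From Stdlib Require Import List Arith Bool.
Import ListNotations.

(* A predicate constant is a pair (name, arity); an atom p(t1..tn) uses the
   predicate constant (p, n). *)
Inductive term : Type :=
| TVar (x : nat)
| TConst (c : nat).

Inductive form : Type :=
| FBot
| FPred (p : nat) (ts : list term)
| FEq (s t : term)
| FAnd (A B : form)
| FOr (A B : form)
| FImp (A B : form)
| FAll (x : nat) (A : form)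
| FEx (x : nat) (A : form).

Definition FNeg (A : form) : form := FImp A FBot.
Definition FTop : form := FImp FBot FBot.
Definition FIff (A B : form) : form := FAnd (FImp A B) (FImp B A).

Fixpoint bigAnd (l : list form) : form :=
  match l with
  | [] => FTop
  | [A] => A
  | A :: l' => FAnd A (bigAnd l')
  end.

Fixpoint bigOr (l : list form) : form :=
  match l with
  | [] => FBot
  | [A] => A
  | A :: l' => FOr A (bigOr l')
  end.

Definition term_has (x : nat) (t : term) : bool :=
  match t with TVar y => Nat.eqb x y | TConst _ => false end.

(* x occurs (free or bound, but not counting binders) *)
Fixpoint occb (x : nat) (A : form) : bool :=
  match A with
  | FBot => false
  | FPred _ ts => existsb (term_has x) ts
  | FEq s t => term_has x s || term_has x t
  | FAnd B C | FOr B C | FImp B C => occb x B || occb x C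
  | FAll _ B | FEx _ B => occb x B
  end.

Fixpoint freeb (x : nat) (A : form) : bool :=
  match A with
  | FBot => false
  | FPred _ ts => existsb (term_has x) ts
  | FEq s t => term_has x s || term_has x t
  | FAnd B C | FOr B C | FImp B C => freeb x B || freeb x C
  | FAll y B | FEx y B => negb (Nat.eqb x y) && freeb x B
  end.

Definition sentence (A : form) : Prop := forall x, freeb x A = false.

Fixpoint qf (A : form) : Prop :=
  match A with
  | FBot | FPred _ _ | FEq _ _ => True
  | FAnd B C | FOr B C | FImp B C => qf B /\ qf C
  | FAll _ _ | FEx _ _ => False
  end.

Definition term_consts (t : term) : list nat :=
  match t with TVar _ => [] | TConst c => [c] end.

Fixpoint consts (A : form) : list nat :=
  match A with
  | FBot => []
  | FPred _ ts => flat_map term_consts ts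
  | FEq s t => term_consts s ++ term_consts t
  | FAnd B C | FOr B C | FImp B C => consts B ++ consts C
  | FAll _ B | FEx _ B => consts B
  end.

Fixpoint preds (A : form) : list (nat * nat) :=
  match A with
  | FBot | FEq _ _ => []
  | FPred p ts => [(p, length ts)]
  | FAnd B C | FOr B C | FImp B C => preds B ++ preds C
  | FAll _ B | FEx _ B => preds B
  end.

(* ---------- Substitution (no renaming; used with side conditions) ------- *)
Definition subst_term (x : nat) (u : term) (t : term) : term :=
  match t with
  | TVar y => if Nat.eqb y x then u else t
  | TConst _ => t
  end.

Fixpoint subst (x : nat) (u : term) (A : form) : form :=
  match A with
  | FBot => FBot
  | FPred p ts => FPred p (map (subst_term x u) ts)
  | FEq s t => FEq (subst_term x u s) (subst_term x u t)
  | FAnd B C => FAnd (subst x u B) (subst x u C)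
  | FOr B C => FOr (subst x u B) (subst x u C)
  | FImp B C => FImp (subst x u B) (subst x u C)
  | FAll y B => if Nat.eqb y x then A else FAll y (subst x u B)
  | FEx y B => if Nat.eqb y x then A else FEx y (subst x u B)
  end.

Fixpoint substitutable (u : term) (x : nat) (A : form) : Prop :=
  match A with
  | FBot | FPred _ _ | FEq _ _ => True
  | FAnd B C | FOr B C | FImp B C =>
      substitutable u x B /\ substitutable u x C
  | FAll y B | FEx y B =>
      freeb x A = false \/ (term_has y u = false /\ substitutable u x B)
  end.

Inductive prv : list form -> form -> Prop :=
| prv_ax G A : In A G -> prv G A
| prv_botE G A : prv G FBot -> prv G A
| prv_andI G A B : prv G A -> prv G B -> prv G (FAnd A B)
| prv_andE1 G A B : prv G (FAnd A B) -> prv G A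
| prv_andE2 G A B : prv G (FAnd A B) -> prv G B
| prv_orI1 G A B : prv G A -> prv G (FOr A B)
| prv_orI2 G A B : prv G B -> prv G (FOr A B)
| prv_orE G A B C :
    prv G (FOr A B) -> prv (A :: G) C -> prv (B :: G) C -> prv G C
| prv_impI G A B : prv (A :: G) B -> prv G (FImp A B)
| prv_impE G A B : prv G (FImp A B) -> prv G A -> prv G B
| prv_allI G x A :
    (forall B, In B G -> freeb x B = false) -> prv G A -> prv G (FAll x A)
| prv_allE G x A u :
    substitutable u x A -> prv G (FAll x A) -> prv G (subst x u A)
| prv_exI G x A u :
    substitutable u x A -> prv G (subst x u A) -> prv G (FEx x A)
| prv_exE G x A C :
    (forall B, In B G -> freeb x B = false) -> freeb x C = false ->
    prv G (FEx x A) -> prv (A :: G) C -> prv G C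
| prv_eqrefl G t : prv G (FEq t t)
| prv_eqsubst G x A s t :
    substitutable s x A -> substitutable t x A ->
    prv G (FEq s t) -> prv G (subst x s A) -> prv G (subst x t A)
| prv_DE G s t : prv G (FOr (FEq s t) (FNeg (FEq s t))).

Inductive quant : Type := QAll | QEx.

Definition quantify (q : quant) (x : nat) (A : form) : form :=
  match q with QAll => FAll x A | QEx => FEx x A end.

Definition prenex (qs : list (quant * nat)) (M : form) : form :=
  fold_right (fun qx A => quantify (fst qx) (snd qx) A) M qs.

Fixpoint rvb (x : nat) (G : form) : bool :=
  match G with
  | FBot => false
  | FEq (TVar _) (TVar _) => false
  | FEq s t => term_has x s || term_has x t
  | FPred _ ts => existsb (term_has x) ts
  | FAnd A B => rvb x A || rvb x B
  | FOr A B => rvb x A && rvb x B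
  | FImp _ _ => false
  | FAll _ _ | FEx _ _ => false
  end.

(* Semi-safety for x in M: every strictly positive occurrence of x in M lies
   in a subformula G -> H of M with x in RV(G). *)
Fixpoint sp_covered (x : nat) (M : form) : Prop :=
  match M with
  | FBot => True
  | FPred _ _ | FEq _ _ => occb x M = false
  | FAnd A B | FOr A B => sp_covered x A /\ sp_covered x B
  | FImp A B => rvb x A = true \/ sp_covered x B
  | FAll _ _ | FEx _ _ => occb x M = false
  end.

Definition semi_safe (qs : list (quant * nat)) (M : form) : Prop :=
  forall q x, In (q, x) qs -> sp_covered x M.

Definition is_bot (A : form) : bool :=
  match A with FBot => true | _ => false end.
Definition is_top (A : form) : bool :=
  match A with FImp FBot FBot => true | _ => false end.

(* exhaustive application of the simplification transformations
   (computed bottom-up; the rewrite system is terminating and confluent) *)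
Fixpoint simp (A : form) : form :=
  match A with
  | FAnd B C =>
      let b := simp B in let c := simp C in
      if is_bot b || is_bot c then FBot
      else if is_top b then c else if is_top c then b else FAnd b c
  | FOr B C =>
      let b := simp B in let c := simp C in
      if is_top b || is_top c then FTop
      else if is_bot b then c else if is_bot c then b else FOr b c
  | FImp B C =>
      let b := simp B in let c := simp C in
      if is_bot b || is_top c then FTop
      else if is_top b then c else FImp b c
  | _ => A
  end.

Fixpoint kill (x : nat) (A : form) : form :=
  match A with
  | FPred _ _ | FEq _ _ => if rvb x A then FBot else A
  | FBot => FBot
  | FAnd B C => FAnd (kill x B) (kill x C)
  | FOr B C => FOr (kill x B) (kill x C)
  | FImp B C => FImp (kill x B) (kill x C)
  | FAll _ _ | FEx _ _ => A
  end.

Definition pos_weak (x : nat) (G : form) : Prop := simp (kill x G) = FTop.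
Definition neg_weak (x : nat) (G : form) : Prop := simp (kill x G) = FBot.

(* "good" subformula for variable x bound by q, at polarity pol
   (pol = true: positive) *)
Definition good (q : quant) (x : nat) (pol : bool) (G : form) : Prop :=
  match q, pol with
  | QAll, true => pos_weak x G
  | QAll, false => neg_weak x G
  | QEx, false => pos_weak x G
  | QEx, true => neg_weak x G
  end.

(* every occurrence of x in G belongs to a subformula of G which is good;
   pol is the polarity of G in the sentence *)
Fixpoint wcov (q : quant) (x : nat) (pol : bool) (G : form) : Prop :=
  good q x pol G \/
  match G with
  | FBot => True
  | FPred _ _ | FEq _ _ => occb x G = false
  | FAnd A B | FOr A B => wcov q x pol A /\ wcov q x pol B
  | FImp A B => wcov q x (negb pol) A /\ wcov q x pol B
  | FAll _ _ | FEx _ _ => occb x G = false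
  end.

Definition prenex_sentence (qs : list (quant * nat)) (M : form) : Prop :=
  qf M /\ NoDup (map snd qs) /\ sentence (prenex qs M).

Definition safe (qs : list (quant * nat)) (M : form) : Prop :=
  prenex_sentence qs M /\ semi_safe qs M /\
  (forall q x, In (q, x) qs -> wcov q x true M).

Fixpoint ground (cs : list nat) (qs : list (quant * nat)) (M : form) : form :=
  match qs with
  | [] => M
  | (QAll, x) :: qs' =>
      bigAnd (map (fun c => ground cs qs' (subst x (TConst c) M)) cs)
  | (QEx, x) :: qs' =>
      bigOr (map (fun c => ground cs qs' (subst x (TConst c) M)) cs)
  end.

Definition in_c (cs : list nat) (m : nat) : form :=
  bigAnd (map (fun j => bigOr (map (fun c => FEq (TVar j) (TConst c)) cs))
              (seq 0 m)).

Definition spp_one (cs : list nat) (pn : nat * nat) : form :=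
  let (p, n) := pn in
  fold_right (fun j A => FAll j A)
    (FImp (FPred p (map TVar (seq 0 n))) (in_c cs n)) (seq 0 n).

Definition SPP (cs : list nat) (F : form) : form :=
  bigAnd (map (spp_one cs) (preds F)).

(* Main.v *)
Require Import Defs.
From Stdlib Require Import List Arith Bool Lia.
Import ListNotations.

Lemma ax_hd G A : prv (A :: G) A.
Proof. apply prv_ax; left; auto. Qed.

Lemma iff_refl' G A : prv G (FIff A A).
Proof. apply prv_andI; apply prv_impI; apply ax_hd. Qed.

Lemma bigAnd_intro G l : (forall A, In A l -> prv G A) -> prv G (bigAnd l).
Proof.
  induction l as [|A l IH]; intros H; simpl.
  - apply prv_impI, ax_hd.
  - destruct l as [|B l'].
    + apply H; left; auto.
    + apply prv_andI. apply H; left; auto. apply IH; intros; apply H; right; auto.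
Qed.

Lemma bigAnd_elim G l A : In A l -> prv G (bigAnd l) -> prv G A.
Proof.
  induction l as [|A0 l IH]; intros Hin H; simpl in *.
  - contradiction.
  - destruct l as [|B l'].
    + destruct Hin as [<-|[]]; auto.
    + destruct Hin as [<-|Hin].
      * eapply prv_andE1; eauto.
      * apply IH; auto. eapply prv_andE2; eauto.
Qed.

Lemma bigOr_intro G l A : In A l -> prv G A -> prv G (bigOr l).
Proof.
  induction l as [|A0 l IH]; intros Hin H; simpl in *.
  - contradiction.
  - destruct l as [|B l'].
    + destruct Hin as [<-|[]]; auto.
    + destruct Hin as [<-|Hin].
      * apply prv_orI1; auto.
      * apply prv_orI2; auto.
Qed.

Definition orsub (l : list form) (B : form) : Prop := exists l', B = bigOr l' /\ incl l' l.

Lemma bigOr_elim G l C : prv G (bigOr l) ->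
  (forall A E, In A l -> Forall (orsub l) E -> prv (A :: E ++ G) C) -> prv G C.
Proof.
  revert G. induction l as [|A0 l IH]; intros G H Hb; simpl in *.
  - apply prv_botE; auto.
  - destruct l as [|B l'].
    + apply prv_impE with A0. apply prv_impI. apply (Hb A0 []); [left; auto| constructor].
      auto.
    + eapply prv_orE; [exact H| apply (Hb A0 []); [left; auto| constructor]|].
      apply IH. apply ax_hd.
      intros A E HA HE.
      specialize (Hb A (E ++ [bigOr (B :: l')])).
      rewrite <- app_assoc in Hb. apply Hb. right; auto.
      apply Forall_app; split.
      * eapply Forall_impl; [|exact HE]. intros X [l0 [-> Hl0]]. exists l0; split; auto.
        intros y Hy; right; auto.
      * constructor; [|constructor]. exists (B :: l'); split; auto. intros y Hy; right; auto.
Qed.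

Lemma freeb_bigAnd z l : (forall A, In A l -> freeb z A = false) -> freeb z (bigAnd l) = false.
Proof.
  induction l as [|A l IH]; intros H; simpl; auto.
  destruct l as [|B l'].
  - apply H; left; auto.
  - simpl. rewrite H by (left; auto). simpl. apply IH; intros; apply H; right; auto.
Qed.

Lemma freeb_bigOr z l : (forall A, In A l -> freeb z A = false) -> freeb z (bigOr l) = false.
Proof.
  induction l as [|A l IH]; intros H; simpl; auto.
  destruct l as [|B l'].
  - apply H; left; auto.
  - simpl. rewrite H by (left; auto). simpl. apply IH; intros; apply H; right; auto.
Qed.

Lemma th_subst_const z x c t : term_has z t = false -> term_has z (subst_term x (TConst c) t) = false.
Proof. destruct t as [y|d]; simpl; auto. destruct (y =? x); auto. Qed.

Lemma th_subst_self x c t : term_has x (subst_term x (TConst c) t) = false.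
Proof.
  destruct t as [y|d]; simpl; auto. destruct (y =? x) eqn:E; simpl; auto.
  rewrite Nat.eqb_sym; auto.
Qed.

Lemma freeb_subst_const z x c A : freeb z A = false -> freeb z (subst x (TConst c) A) = false.
Proof.
  induction A; simpl; intros H; auto.
  - induction ts as [|t ts IH]; simpl in *; auto.
    apply orb_false_iff in H as [H1 H2]. rewrite IH; auto. rewrite orb_false_r.
    apply th_subst_const; auto.
  - apply orb_false_iff in H as [H1 H2]. rewrite !th_subst_const; auto.
  - apply orb_false_iff in H as [H1 H2]; rewrite IHA1, IHA2; auto.
  - apply orb_false_iff in H as [H1 H2]; rewrite IHA1, IHA2; auto.
  - apply orb_false_iff in H as [H1 H2]; rewrite IHA1, IHA2; auto.
  - destruct (x0 =? x); simpl; auto. apply andb_false_iff in H as [H|H];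
    [rewrite H; auto | rewrite IHA; auto; apply andb_false_r].
  - destruct (x0 =? x); simpl; auto. apply andb_false_iff in H as [H|H];
    [rewrite H; auto | rewrite IHA; auto; apply andb_false_r].
Qed.

Lemma freeb_subst_self x c A : freeb x (subst x (TConst c) A) = false.
Proof.
  induction A; simpl; auto.
  - induction ts as [|t ts IH]; simpl; auto.
    rewrite IH, th_subst_self; auto.
  - rewrite !th_subst_self; auto.
  - rewrite IHA1, IHA2; auto.
  - rewrite IHA1, IHA2; auto.
  - rewrite IHA1, IHA2; auto.
  - destruct (x0 =? x) eqn:E; simpl.
    + apply Nat.eqb_eq in E; subst. rewrite Nat.eqb_refl; auto.
    + rewrite IHA. apply andb_false_r.
  - destruct (x0 =? x) eqn:E; simpl.
    + apply Nat.eqb_eq in E; subst. rewrite Nat.eqb_refl; auto.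
    + rewrite IHA. apply andb_false_r.
Qed.

Lemma freeb_ground cs z qs A : (freeb z A = false \/ In z (map snd qs)) ->
  freeb z (ground cs qs A) = false.
Proof.
  revert A; induction qs as [|[q x] qs IH]; intros A H; simpl in *.
  - destruct H; [auto|contradiction].
  - destruct q; [apply freeb_bigAnd|apply freeb_bigOr]; intros B HB;
      apply in_map_iff in HB as [c [<- Hc]]; apply IH;
      (destruct H as [H|[H|H]]; [left; apply freeb_subst_const; auto
         | subst; left; apply freeb_subst_self | right; auto]).
Qed.

Lemma freeb_prenex z qs A : In z (map snd qs) -> freeb z (prenex qs A) = false.
Proof.
  induction qs as [|[q x] qs IH]; simpl; intros H; [contradiction|].
  destruct q; simpl; destruct H as [->|H];
    try (rewrite Nat.eqb_refl; auto);
    rewrite IH; auto; apply andb_false_r.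
Qed.

Lemma subst_term_id x t : subst_term x (TVar x) t = t.
Proof. destruct t as [y|d]; simpl; auto. destruct (y =? x) eqn:E; auto. apply Nat.eqb_eq in E; subst; auto. Qed.

Lemma subst_id x A : subst x (TVar x) A = A.
Proof.
  induction A; simpl; auto; try (rewrite IHA1, IHA2; auto).
  - f_equal. induction ts; simpl; auto. rewrite subst_term_id, IHts; auto.
  - rewrite !subst_term_id; auto.
  - destruct (x0 =? x); auto. rewrite IHA; auto.
  - destruct (x0 =? x); auto. rewrite IHA; auto.
Qed.

Lemma subst_bigAnd x u l : subst x u (bigAnd l) = bigAnd (map (subst x u) l).
Proof.
  induction l as [|A l IH]; simpl; auto.
  destruct l as [|B l']; simpl in *; auto. rewrite IH; auto.
Qed.

Lemma subst_bigOr x u l : subst x u (bigOr l) = bigOr (map (subst x u) l).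
Proof.
  induction l as [|A l IH]; simpl; auto.
  destruct l as [|B l']; simpl in *; auto. rewrite IH; auto.
Qed.

Lemma qf_subst_ok u y B : qf B -> substitutable u y B.
Proof. induction B; simpl; intuition. Qed.

Lemma subst_ok_const c x A : substitutable (TConst c) x A.
Proof. induction A; simpl; intuition. Qed.

Lemma subst_ok_prenex u x qs A : qf A ->
  (forall z, In z (map snd qs) -> term_has z u = false) -> substitutable u x (prenex qs A).
Proof.
  intros HA; induction qs as [|[q y] qs IH]; intros H; simpl.
  - apply qf_subst_ok; auto.
  - destruct q; simpl; right; split; auto; apply H || apply IH; simpl; auto;
      intros; apply H; simpl; auto.
Qed.

Lemma subst_prenex x u qs A : ~ In x (map snd qs) ->
  subst x u (prenex qs A) = prenex qs (subst x u A).
Proof.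
  induction qs as [|[q y] qs IH]; intros H; simpl in *; auto.
  assert (E : (y =? x) = false) by (apply Nat.eqb_neq; intro; subst; auto).
  destruct q; simpl; rewrite E; rewrite IH; auto.
Qed.

Definition prenex_cons q x qs A : prenex ((q, x) :: qs) A = quantify q x (prenex qs A) := eq_refl.

Definition sterm (s : nat -> term) (t : term) : term :=
  match t with TVar y => s y | TConst c => TConst c end.

Fixpoint ssubst (s : nat -> term) (A : form) : form :=
  match A with
  | FBot => FBot
  | FPred p ts => FPred p (map (sterm s) ts)
  | FEq a b => FEq (sterm s a) (sterm s b)
  | FAnd B C => FAnd (ssubst s B) (ssubst s C)
  | FOr B C => FOr (ssubst s B) (ssubst s C)
  | FImp B C => FImp (ssubst s B) (ssubst s C)
  | FAll _ _ | FEx _ _ => A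
  end.

Definition upd (s : nat -> term) x u : nat -> term := fun y => if y =? x then u else s y.

Definition sok (s : nat -> term) := forall y, s y = TVar y \/ exists c, s y = TConst c.

Lemma ssubst_id A : ssubst TVar A = A.
Proof.
  induction A; simpl; auto; try (rewrite IHA1, IHA2; auto).
  - f_equal. induction ts as [|[y|d] ts IH]; simpl; auto; rewrite IH; auto.
  - destruct s, t; auto.
Qed.

Lemma qf_ssubst s A : qf A -> qf (ssubst s A).
Proof. induction A; simpl; intuition. Qed.

Lemma ssubst_subst x u s A : qf A ->
  subst x u (ssubst s A) = ssubst (fun y => subst_term x u (s y)) A.
Proof.
  induction A; simpl; intros H; auto; try (destruct H; rewrite IHA1, IHA2; auto).
  all: try contradiction.
  all: try (f_equal; rewrite map_map; apply map_ext; intros [y|d]; simpl; auto; fail).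
  all: try (destruct s0, t; simpl; auto).
Qed.

Lemma ssubst_ext_occ s r A : (forall y, occb y A = true -> s y = r y) -> ssubst s A = ssubst r A.
Proof.
  induction A; simpl; intros H; auto;
    try (rewrite IHA1, IHA2; auto; intros y Hy; apply H; rewrite Hy; auto using orb_true_r).
  - f_equal. apply map_ext_in. intros [y|d] Hin; simpl; auto. apply H.
    apply existsb_exists. exists (TVar y); split; auto. simpl. apply Nat.eqb_refl.
  - destruct s0 as [y|d], t as [y'|d']; simpl in *; auto; f_equal; try apply H;
      try rewrite Nat.eqb_refl; auto using orb_true_r.
Qed.

Lemma subst_upd s x u y : sok s -> s x = TVar x -> subst_term x u (s y) = upd s x u y.
Proof.
  intros Hs Hx. unfold upd. destruct (y =? x) eqn:E.
  - apply Nat.eqb_eq in E; subst. rewrite Hx. simpl. rewrite Nat.eqb_refl; auto.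
  - destruct (Hs y) as [H|[c H]]; rewrite H; simpl; auto. rewrite E; auto.
Qed.

Lemma ssubst_subst_upd x c s A : qf A -> sok s -> s x = TVar x ->
  subst x (TConst c) (ssubst s A) = ssubst (upd s x (TConst c)) A.
Proof.
  intros HA Hs Hx. rewrite ssubst_subst by auto. apply ssubst_ext_occ.
  intros y _. apply subst_upd; auto.
Qed.

Lemma sok_upd s x c : sok s -> sok (upd s x (TConst c)).
Proof. intros H y. unfold upd. destruct (y =? x); eauto. Qed.

Definition mvt (t : term) : nat := match t with TVar y => y | TConst _ => 0 end.

Fixpoint mv (A : form) : nat :=
  match A with
  | FBot => 0
  | FPred _ ts => list_max (map mvt ts)
  | FEq s t => max (mvt s) (mvt t)
  | FAnd B C | FOr B C | FImp B C => max (mv B) (mv C)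
  | FAll x B | FEx x B => max x (mv B)
  end.

Lemma th_fresh z t : mvt t < z -> term_has z t = false.
Proof. destruct t; simpl; intros; auto. apply Nat.eqb_neq; lia. Qed.

Lemma mv_fresh z A : mv A < z -> freeb z A = false.
Proof.
  induction A; simpl; intros H; auto.
  - induction ts as [|t ts IH]; simpl in *; auto.
    rewrite th_fresh by lia. apply IH; lia.
  - rewrite !th_fresh by lia; auto.
  - rewrite IHA1, IHA2 by lia; auto.
  - rewrite IHA1, IHA2 by lia; auto.
  - rewrite IHA1, IHA2 by lia; auto.
  - rewrite IHA by lia; apply andb_false_r.
  - rewrite IHA by lia; apply andb_false_r.
Qed.

Lemma list_max_in a l : In a l -> a <= list_max l.
Proof. induction l; simpl; intros []; subst; try lia. specialize (IHl H); lia. Qed.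

Definition body (cs : list nat) (p n : nat) (tau : nat -> term) : form :=
  FImp (FPred p (map tau (seq 0 n)))
    (bigAnd (map (fun j => bigOr (map (fun c => FEq (tau j) (TConst c)) cs)) (seq 0 n))).

Definition allf (ys : list nat) (B : form) : form := fold_right (fun j A => FAll j A) B ys.

Lemma spp_body cs p n : spp_one cs (p, n) = allf (seq 0 n) (body cs p n TVar).
Proof. reflexivity. Qed.

Lemma qf_bigAnd l : (forall A, In A l -> qf A) -> qf (bigAnd l).
Proof.
  induction l as [|A l IH]; simpl; intros H; auto.
  destruct l; [apply H; auto|]. split; [apply H; auto|apply IH; intros; apply H; auto].
Qed.

Lemma qf_bigOr l : (forall A, In A l -> qf A) -> qf (bigOr l).
Proof.
  induction l as [|A l IH]; simpl; intros H; auto.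
  destruct l; [apply H; auto|]. split; [apply H; auto|apply IH; intros; apply H; auto].
Qed.

Lemma body_qf cs p n tau : qf (body cs p n tau).
Proof.
  simpl. split; auto. apply qf_bigAnd. intros A HA. apply in_map_iff in HA as [j [<- _]].
  apply qf_bigOr. intros B HB. apply in_map_iff in HB as [c [<- _]]. simpl; auto.
Qed.

Lemma body_subst cs p n tau y u :
  subst y u (body cs p n tau) = body cs p n (fun j => subst_term y u (tau j)).
Proof.
  unfold body. simpl. rewrite subst_bigAnd, !map_map. f_equal.
  f_equal. apply map_ext. intros j. rewrite subst_bigOr, map_map. reflexivity.
Qed.

Lemma body_ext cs p n tau tau' : (forall j, j < n -> tau j = tau' j) ->
  body cs p n tau = body cs p n tau'.
Proof.
  intros H. unfold body. f_equal.
  - f_equal. apply map_ext_in. intros j Hj. apply in_seq in Hj. apply H; lia.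
  - f_equal. apply map_ext_in. intros j Hj. apply in_seq in Hj. rewrite H by lia. auto.
Qed.

Lemma subst_ok_allf u y ys B : qf B -> (forall y', In y' ys -> term_has y' u = false) ->
  substitutable u y (allf ys B).
Proof.
  intros HB; induction ys as [|y' ys IH]; simpl; intros H.
  - apply qf_subst_ok; auto.
  - right; split; auto.
Qed.

Lemma subst_allf y u ys B : ~ In y ys -> subst y u (allf ys B) = allf ys (subst y u B).
Proof.
  induction ys as [|y' ys IH]; simpl; intros H; auto.
  assert (E : (y' =? y) = false) by (apply Nat.eqb_neq; intro; subst; auto).
  rewrite E, IH; auto.
Qed.

Fixpoint rp (ys : list nat) (ts : list term) (t : term) : term :=
  match ys, ts with
  | y :: ys', u :: ts' => rp ys' ts' (subst_term y u t)
  | _, _ => t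
  end.

Lemma allE_multi cs p n G ys ts tau :
  length ys = length ts -> NoDup ys ->
  (forall t y, In t ts -> In y ys -> term_has y t = false) ->
  prv G (allf ys (body cs p n tau)) ->
  prv G (body cs p n (fun j => rp ys ts (tau j))).
Proof.
  revert ts tau. induction ys as [|y ys IH]; intros ts tau Hl Hnd Ht H.
  - destruct ts; simpl in *; try discriminate. auto.
  - destruct ts as [|u ts]; simpl in *; try discriminate.
    inversion Hnd; subst.
    apply prv_allE with (u := u) in H.
    + rewrite subst_allf, body_subst in H by auto.
      apply (IH ts (fun j => subst_term y u (tau j))); auto.
    + apply subst_ok_allf. apply body_qf. intros; apply Ht; auto.
Qed.

Lemma allI_multi G zs B : (forall z C, In z zs -> In C G -> freeb z C = false) ->
  prv G B -> prv G (allf zs B).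
Proof.
  induction zs; simpl; intros H HB; auto.
  apply prv_allI. intros; apply H; auto. apply IHzs; auto.
Qed.

Lemma rp_const ys ts t : (forall y, In y ys -> term_has y t = false) -> rp ys ts t = t.
Proof.
  revert ts; induction ys as [|y ys IH]; intros ts H; destruct ts; simpl; auto.
  destruct t as [z|d]; simpl.
  - assert (E : (z =? y) = false). { specialize (H y (or_introl eq_refl)). simpl in H.
      rewrite Nat.eqb_sym; auto. }
    rewrite E. apply IH. intros; apply H; simpl; auto.
  - apply IH; intros; apply H; simpl; auto.
Qed.

Lemma rp_nth ys ts i d d' : NoDup ys -> length ys = length ts ->
  (forall t y, In t ts -> In y ys -> term_has y t = false) -> i < length ys ->
  rp ys ts (TVar (nth i ys d)) = nth i ts d'.
Proof.
  revert ts i; induction ys as [|y ys IH]; intros ts i Hnd Hl Ht Hi; simpl in *; [lia|].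
  destruct ts as [|u ts]; simpl in *; try discriminate.
  inversion Hnd; subst.
  destruct i as [|i].
  - simpl. rewrite Nat.eqb_refl. apply rp_const. intros; apply Ht; auto.
  - assert (E : (nth i ys d =? y) = false).
    { apply Nat.eqb_neq. intro E. apply H1. rewrite <- E. apply nth_In; lia. }
    simpl. rewrite E. apply IH; auto. lia.
Qed.

Lemma map_nth_seq' (ts : list term) d : map (fun j => nth j ts d) (seq 0 (length ts)) = ts.
Proof.
  induction ts as [|t ts IH]; simpl; auto. f_equal.
  rewrite <- seq_shift, map_map. simpl. auto.
Qed.

Lemma spp_inst cs p ts G : prv G (spp_one cs (p, length ts)) -> prv G (FPred p ts) ->
  forall j, j < length ts ->
  prv G (bigOr (map (fun c => FEq (nth j ts (TVar 0)) (TConst c)) cs)).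
Proof.
  intros H Hp j Hj.
  set (n := length ts) in *.
  set (N := S (list_max (n :: map mv G ++ map mvt ts))).
  assert (HnN : n < N) by (unfold N; simpl; lia).
  assert (HG : forall C, In C G -> mv C < N).
  { intros C HC. unfold N. simpl. pose proof (list_max_in (mv C) (map mv G ++ map mvt ts)).
    assert (In (mv C) (map mv G ++ map mvt ts)) by (apply in_app_iff; left; apply in_map; auto).
    specialize (H0 H1). lia. }
  assert (Hts : forall t, In t ts -> mvt t < N).
  { intros t Ht. unfold N. simpl. pose proof (list_max_in (mvt t) (map mv G ++ map mvt ts)).
    assert (In (mvt t) (map mv G ++ map mvt ts)) by (apply in_app_iff; right; apply in_map; auto).
    specialize (H0 H1). lia. }
  rewrite spp_body in H.
  apply (allE_multi cs p n G (seq 0 n) (map TVar (seq N n))) in H.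
  2: { rewrite length_map, !length_seq; auto. }
  2: { apply seq_NoDup. }
  2: { intros t y Ht Hy. apply in_map_iff in Ht as [z [<- Hz]]. apply in_seq in Hz, Hy.
       simpl. apply Nat.eqb_neq. lia. }
  rewrite (body_ext cs p n _ (fun j => TVar (N + j))) in H.
  2: { intros k Hk. replace (TVar k) with (TVar (nth k (seq 0 n) 0)) by (rewrite seq_nth; auto).
       rewrite (rp_nth _ _ _ _ (TVar (N + 0))).
       - rewrite Nat.add_0_r, map_nth, seq_nth; auto.
       - apply seq_NoDup.
       - rewrite length_map, !length_seq; auto.
       - intros t y Ht Hy. apply in_map_iff in Ht as [z [<- Hz]]. apply in_seq in Hz, Hy.
         simpl. apply Nat.eqb_neq. lia.
       - rewrite length_seq; auto. }
  apply (allI_multi G (seq N n)) in H.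
  2: { intros z C Hz HC. apply mv_fresh. apply in_seq in Hz. specialize (HG C HC). lia. }
  apply (allE_multi cs p n G (seq N n) ts) in H.
  2: { rewrite length_seq; auto. }
  2: { apply seq_NoDup. }
  2: { intros t y Ht Hy. apply in_seq in Hy. apply th_fresh. specialize (Hts t Ht). lia. }
  rewrite (body_ext cs p n _ (fun j => nth j ts (TVar 0))) in H.
  2: { intros k Hk. replace (N + k) with (nth k (seq N n) 0) by (rewrite seq_nth; auto).
       apply rp_nth.
       - apply seq_NoDup.
       - rewrite length_seq; auto.
       - intros t y Ht Hy. apply in_seq in Hy. apply th_fresh. specialize (Hts t Ht). lia.
       - rewrite length_seq; auto. }
  unfold body in H. unfold n in H. rewrite map_nth_seq' in H.
  apply (prv_impE _ _ _ H) in Hp.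
  eapply bigAnd_elim; [|exact Hp].
  apply in_map_iff. exists j. split; auto. apply in_seq. lia.
Qed.

Lemma freeb_allf z ys B : (In z ys \/ freeb z B = false) -> freeb z (allf ys B) = false.
Proof.
  induction ys as [|y ys IH]; simpl; intros [H|H]; auto; try contradiction.
  - destruct H as [->|H]. rewrite Nat.eqb_refl; auto. rewrite IH; auto. apply andb_false_r.
  - rewrite IH; auto. apply andb_false_r.
Qed.

Lemma existsb_false z l : (forall t, In t l -> term_has z t = false) -> existsb (term_has z) l = false.
Proof.
  induction l; simpl; intros H; auto. rewrite H by auto; simpl. apply IHl; auto.
Qed.

Lemma SPP_closed cs F z : freeb z (SPP cs F) = false.
Proof.
  unfold SPP. apply freeb_bigAnd. intros A HA. apply in_map_iff in HA as [[p n] [<- _]].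
  rewrite spp_body. apply freeb_allf.
  destruct (Nat.lt_ge_cases z n) as [Hz|Hz]; [left; apply in_seq; lia|right].
  unfold body; simpl. apply orb_false_iff; split.
  - apply existsb_false. intros t Ht. apply in_map_iff in Ht as [j [<- Hj]].
    apply in_seq in Hj. simpl. apply Nat.eqb_neq; lia.
  - apply freeb_bigAnd. intros B HB. apply in_map_iff in HB as [j [<- Hj]].
    apply in_seq in Hj. apply freeb_bigOr. intros C HC. apply in_map_iff in HC as [c [<- _]].
    simpl. rewrite orb_false_r. apply Nat.eqb_neq; lia.
Qed.

Lemma eq_sym' G s t : prv G (FEq s t) -> prv G (FEq t s).
Proof.
  intros H.
  set (w := S (mvt s + mvt t)).
  assert (Hs : subst_term w s s = s) by (destruct s; simpl; auto;
     replace (x =? w) with false; auto; symmetry; apply Nat.eqb_neq; unfold w; simpl; lia).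
  assert (Ht : subst_term w t s = s) by (destruct s; simpl; auto;
     replace (x =? w) with false; auto; symmetry; apply Nat.eqb_neq; unfold w; simpl; lia).
  assert (E1 : subst w s (FEq (TVar w) s) = FEq s s) by (simpl; rewrite Nat.eqb_refl, Hs; auto).
  assert (E2 : subst w t (FEq (TVar w) s) = FEq t s) by (simpl; rewrite Nat.eqb_refl, Ht; auto).
  rewrite <- E2. apply prv_eqsubst with (s := s); [simpl; auto | simpl; auto | exact H | ].
  rewrite E1. apply prv_eqrefl.
Qed.

(* case split on x = c for c in L, using DE *)
Definition xneg x B := exists c, B = FNeg (FEq (TVar x) (TConst c)).

Lemma split_cases x C : forall L G,
  (forall c E, In c L -> Forall (xneg x) E -> prv (FEq (TVar x) (TConst c) :: E ++ G) C) ->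
  (forall E, Forall (xneg x) E -> (forall c, In c L -> In (FNeg (FEq (TVar x) (TConst c))) E) ->
     prv (E ++ G) C) ->
  prv G C.
Proof.
  induction L as [|c L IH]; intros G H1 H2.
  - apply (H2 []); auto.
  - eapply prv_orE. apply (prv_DE G (TVar x) (TConst c)).
    + apply (H1 c []); simpl; auto.
    + apply IH.
      * intros c' E Hc' HE. specialize (H1 c' (E ++ [FNeg (FEq (TVar x) (TConst c))])).
        rewrite <- app_assoc in H1. apply H1. simpl; auto.
        apply Forall_app; split; auto. constructor; [exists c; auto|constructor].
      * intros E HE Hin. specialize (H2 (E ++ [FNeg (FEq (TVar x) (TConst c))])).
        rewrite <- app_assoc in H2. apply H2.
        apply Forall_app; split; auto. constructor; [exists c; auto|constructor].
        intros c' [<-|Hc']; apply in_app_iff; [right; left; auto| left; auto].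
Qed.

Lemma lift qs A B : qf A -> qf B -> NoDup (map snd qs) -> forall G,
  (forall z C, In z (map snd qs) -> In C G -> freeb z C = false) ->
  (forall G', incl G G' -> prv G' (FImp A B)) ->
  prv G (FImp (prenex qs A) (prenex qs B)).
Proof.
  intros HA HB. induction qs as [|[q y] qs IH]; intros Hnd G Hfr H; simpl in Hnd.
  - apply H. intros a; auto.
  - inversion Hnd as [|? ? Hy Hnd']; subst.
    rewrite !prenex_cons. destruct q; simpl.
    + apply prv_impI. apply prv_allI.
      { intros C [<-|HC]; simpl. rewrite Nat.eqb_refl; auto. apply Hfr; simpl; auto. }
      apply prv_impE with (prenex qs A).
      * apply IH; auto.
        -- intros z C Hz [<-|HC]. simpl. rewrite freeb_prenex by auto. apply andb_false_r.
           apply Hfr; simpl; auto.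
        -- intros G' HG'. apply H. intros a Ha; apply HG'; right; auto.
      * assert (Hx := prv_allE (FAll y (prenex qs A) :: G) y (prenex qs A) (TVar y)).
        rewrite subst_id in Hx. apply Hx; [|apply ax_hd].
        apply subst_ok_prenex; auto. intros z Hz. simpl. apply Nat.eqb_neq. intro; subst; auto.
    + apply prv_impI. apply prv_exE with y (prenex qs A).
      { intros C [<-|HC]; simpl. rewrite Nat.eqb_refl; auto. apply Hfr; simpl; auto. }
      { simpl. rewrite Nat.eqb_refl; auto. }
      apply ax_hd.
      apply prv_exI with (TVar y).
      apply subst_ok_prenex; auto. intros z Hz. simpl. apply Nat.eqb_neq. intro; subst; auto.
      rewrite subst_id.
      apply prv_impE with (prenex qs A); [|apply ax_hd].
      apply IH; auto.
      -- intros z C Hz [<-|[<-|HC]]. rewrite freeb_prenex by auto; auto.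
         simpl. rewrite freeb_prenex by auto. apply andb_false_r.
         apply Hfr; simpl; auto.
      -- intros G' HG'. apply H. intros a Ha; apply HG'; right; right; auto.
Qed.

Lemma is_bot_true b : is_bot b = true -> b = FBot.
Proof. destruct b; simpl; congruence. Qed.
Lemma is_top_true b : is_top b = true -> b = FTop.
Proof. destruct b; simpl; try congruence. destruct b1; simpl; try congruence; destruct b2; simpl; try congruence; auto. Qed.

Ltac simp_cases B C :=
  simpl; destruct (is_bot (simp B)) eqn:E1, (is_bot (simp C)) eqn:E2,
    (is_top (simp B)) eqn:E3, (is_top (simp C)) eqn:E4; simpl; intros H;
  repeat match goal with
  | [ K : is_bot _ = true |- _ ] => apply is_bot_true in K
  | [ K : is_top _ = true |- _ ] => apply is_top_true in K
  end;
  try discriminate;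
  try (injection H; intros; subst);
  repeat match goal with
  | [ K : ?a = ?b |- _ ] => rewrite K in *
  end; simpl in *; try discriminate; tauto.

Lemma sand_top B C : simp (FAnd B C) = FTop -> simp B = FTop /\ simp C = FTop.
Proof. simp_cases B C. Qed.
Lemma sand_bot B C : simp (FAnd B C) = FBot -> simp B = FBot \/ simp C = FBot.
Proof. simp_cases B C. Qed.
Lemma sor_top B C : simp (FOr B C) = FTop -> simp B = FTop \/ simp C = FTop.
Proof. simp_cases B C. Qed.
Lemma sor_bot B C : simp (FOr B C) = FBot -> simp B = FBot /\ simp C = FBot.
Proof. simp_cases B C. Qed.
Lemma simp_top B C : simp (FImp B C) = FTop -> simp B = FBot \/ simp C = FTop.
Proof. simp_cases B C. Qed.
Lemma simp_bot B C : simp (FImp B C) = FBot -> simp B = FTop /\ simp C = FBot.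
Proof. simp_cases B C. Qed.

Definition okx cs F0 x G :=
  In (SPP cs F0) G /\ forall c, In c cs -> In (FNeg (FEq (TVar x) (TConst c))) G.

Lemma okx_incl cs F0 x G G' : okx cs F0 x G -> incl G G' -> okx cs F0 x G'.
Proof. intros [H1 H2] Hi; split; auto. Qed.

Lemma incl_cons_r {X} (G : list X) A : incl G (A :: G).
Proof. intros a Ha; right; auto. Qed.

Lemma kill_eqx cs F0 x G d : okx cs F0 x G -> In d cs ->
  prv G (FEq (TVar x) (TConst d)) -> prv G FBot.
Proof. intros [_ H] Hd Heq. apply prv_impE with (FEq (TVar x) (TConst d)); [apply prv_ax; apply H; auto | exact Heq]. Qed.

Lemma kill_pred cs F0 x G p ts : okx cs F0 x G -> In (p, length ts) (preds F0) ->
  In (TVar x) ts -> prv G (FPred p ts) -> prv G FBot.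
Proof.
  intros Hok Hp Hx H.
  assert (Hs : prv G (spp_one cs (p, length ts))).
  { eapply bigAnd_elim; [apply in_map; exact Hp|]. apply prv_ax. apply Hok. }
  apply In_nth with (d := TVar 0) in Hx as [j [Hj Hjx]].
  pose proof (spp_inst cs p ts G Hs H j Hj) as Hor. rewrite Hjx in Hor.
  apply (bigOr_elim _ _ _ Hor). intros A E HA HE.
  apply in_map_iff in HA as [c [<- Hc]].
  eapply kill_eqx; [| exact Hc | apply ax_hd].
  eapply okx_incl; [exact Hok|]. intros a Ha; right; apply in_app_iff; right; auto.
Qed.

Lemma K cs F0 x s X : qf X -> incl (preds X) (preds F0) -> incl (consts X) cs -> s x = TVar x ->
  forall G, okx cs F0 x G ->
  (simp (kill x X) = FTop -> prv G (ssubst s X)) /\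
  (simp (kill x X) = FBot -> prv G (FImp (ssubst s X) FBot)).
Proof.
  intros Hqf Hp Hc Hx. induction X; intros G Hok; simpl in Hqf.
  - simpl. split; intros H; [discriminate|]. apply prv_impI, ax_hd.
  - simpl. destruct (existsb (term_has x) ts) eqn:E; simpl; split; intros H; try discriminate.
    apply prv_impI. apply (kill_pred cs F0 x _ p (map (sterm s) ts)).
    + eapply okx_incl; [exact Hok| apply incl_cons_r].
    + rewrite length_map. apply Hp. simpl; auto.
    + apply existsb_exists in E as [t [Ht Hxt]].
      destruct t as [y|d]; simpl in Hxt; try discriminate. apply Nat.eqb_eq in Hxt.
      rewrite <- Hxt in Ht. replace (TVar x) with (sterm s (TVar x)) by (simpl; auto).
      apply in_map; auto.
    + apply ax_hd.
  - destruct s0 as [y|d], t as [y'|d']; simpl; try (split; intros H; discriminate).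
    + destruct (x =? y) eqn:E; simpl; split; intros H; try discriminate.
      apply Nat.eqb_eq in E; subst y. rewrite Hx. apply prv_impI.
      eapply kill_eqx; [eapply okx_incl; [exact Hok| apply incl_cons_r] | | apply ax_hd].
      apply Hc; simpl; auto.
    + destruct (x =? y') eqn:E; simpl; split; intros H; try discriminate.
      apply Nat.eqb_eq in E; subst y'. rewrite Hx. apply prv_impI.
      eapply kill_eqx; [eapply okx_incl; [exact Hok| apply incl_cons_r] | | apply eq_sym', ax_hd].
      apply Hc; simpl; auto.
  - destruct Hqf as [Q1 Q2].
    assert (Hp1 : incl (preds X1) (preds F0)) by (intros a Ha; apply Hp; simpl; apply in_app_iff; auto).
    assert (Hp2 : incl (preds X2) (preds F0)) by (intros a Ha; apply Hp; simpl; apply in_app_iff; auto).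
    assert (Hc1 : incl (consts X1) cs) by (intros a Ha; apply Hc; simpl; apply in_app_iff; auto).
    assert (Hc2 : incl (consts X2) cs) by (intros a Ha; apply Hc; simpl; apply in_app_iff; auto).
    split; intros H.
    + apply sand_top in H as [H1 H2]. simpl. apply prv_andI.
      apply (IHX1 Q1 Hp1 Hc1 G Hok); auto. apply (IHX2 Q2 Hp2 Hc2 G Hok); auto.
    + apply sand_bot in H as [H1|H1]; simpl; apply prv_impI.
      * apply prv_impE with (ssubst s X1).
        apply (IHX1 Q1 Hp1 Hc1 _ (okx_incl _ _ _ _ _ Hok (incl_cons_r _ _))); auto.
        eapply prv_andE1; apply ax_hd.
      * apply prv_impE with (ssubst s X2).
        apply (IHX2 Q2 Hp2 Hc2 _ (okx_incl _ _ _ _ _ Hok (incl_cons_r _ _))); auto.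
        eapply prv_andE2; apply ax_hd.
  - destruct Hqf as [Q1 Q2].
    assert (Hp1 : incl (preds X1) (preds F0)) by (intros a Ha; apply Hp; simpl; apply in_app_iff; auto).
    assert (Hp2 : incl (preds X2) (preds F0)) by (intros a Ha; apply Hp; simpl; apply in_app_iff; auto).
    assert (Hc1 : incl (consts X1) cs) by (intros a Ha; apply Hc; simpl; apply in_app_iff; auto).
    assert (Hc2 : incl (consts X2) cs) by (intros a Ha; apply Hc; simpl; apply in_app_iff; auto).
    split; intros H.
    + apply sor_top in H as [H1|H1]; simpl.
      apply prv_orI1; apply (IHX1 Q1 Hp1 Hc1 G Hok); auto.
      apply prv_orI2; apply (IHX2 Q2 Hp2 Hc2 G Hok); auto.
    + apply sor_bot in H as [H1 H2]; simpl; apply prv_impI.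
      eapply prv_orE; [apply ax_hd| |].
      * apply prv_impE with (ssubst s X1); [|apply ax_hd].
        apply (IHX1 Q1 Hp1 Hc1); auto. eapply okx_incl; [exact Hok|].
        intros a Ha; right; right; auto.
      * apply prv_impE with (ssubst s X2); [|apply ax_hd].
        apply (IHX2 Q2 Hp2 Hc2); auto. eapply okx_incl; [exact Hok|].
        intros a Ha; right; right; auto.
  - destruct Hqf as [Q1 Q2].
    assert (Hp1 : incl (preds X1) (preds F0)) by (intros a Ha; apply Hp; simpl; apply in_app_iff; auto).
    assert (Hp2 : incl (preds X2) (preds F0)) by (intros a Ha; apply Hp; simpl; apply in_app_iff; auto).
    assert (Hc1 : incl (consts X1) cs) by (intros a Ha; apply Hc; simpl; apply in_app_iff; auto).
    assert (Hc2 : incl (consts X2) cs) by (intros a Ha; apply Hc; simpl; apply in_app_iff; auto).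
    split; intros H.
    + apply simp_top in H as [H1|H1]; simpl; apply prv_impI.
      * apply prv_botE. apply prv_impE with (ssubst s X1); [|apply ax_hd].
        apply (IHX1 Q1 Hp1 Hc1); auto. eapply okx_incl; [exact Hok| apply incl_cons_r].
      * apply (IHX2 Q2 Hp2 Hc2); auto. eapply okx_incl; [exact Hok| apply incl_cons_r].
    + apply simp_bot in H as [H1 H2]; simpl; apply prv_impI.
      apply prv_impE with (ssubst s X2).
      * apply (IHX2 Q2 Hp2 Hc2); auto. eapply okx_incl; [exact Hok| apply incl_cons_r].
      * apply prv_impE with (ssubst s X1); [apply ax_hd|].
        apply (IHX1 Q1 Hp1 Hc1); auto. eapply okx_incl; [exact Hok| apply incl_cons_r].
  - contradiction.
  - contradiction.
Qed.


Definition dir q (pol : bool) := match q with QAll => pol | QEx => negb pol end.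
Definition imp_dir (d : bool) A B := if d then FImp A B else FImp B A.

Lemma imp_dir_refl d G A : prv G (imp_dir d A A).
Proof. destruct d; simpl; apply prv_impI, ax_hd. Qed.

Lemma mono_and d G A1 A2 B1 B2 :
  (forall G', incl G G' -> prv G' (imp_dir d A1 A2)) ->
  (forall G', incl G G' -> prv G' (imp_dir d B1 B2)) ->
  prv G (imp_dir d (FAnd A1 B1) (FAnd A2 B2)).
Proof.
  intros HA HB; destruct d; simpl in *; apply prv_impI; apply prv_andI.
  - apply prv_impE with A1; [apply HA, incl_cons_r| eapply prv_andE1, ax_hd].
  - apply prv_impE with B1; [apply HB, incl_cons_r| eapply prv_andE2, ax_hd].
  - apply prv_impE with A2; [apply HA, incl_cons_r| eapply prv_andE1, ax_hd].
  - apply prv_impE with B2; [apply HB, incl_cons_r| eapply prv_andE2, ax_hd].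
Qed.

Lemma incl_cons2 {X} (G : list X) A B : incl G (A :: B :: G).
Proof. intros a Ha; right; right; auto. Qed.

Lemma mono_or d G A1 A2 B1 B2 :
  (forall G', incl G G' -> prv G' (imp_dir d A1 A2)) ->
  (forall G', incl G G' -> prv G' (imp_dir d B1 B2)) ->
  prv G (imp_dir d (FOr A1 B1) (FOr A2 B2)).
Proof.
  intros HA HB; destruct d; simpl in *; apply prv_impI; (eapply prv_orE; [apply ax_hd| |]).
  - apply prv_orI1. apply prv_impE with A1; [apply HA, incl_cons2| apply ax_hd].
  - apply prv_orI2. apply prv_impE with B1; [apply HB, incl_cons2| apply ax_hd].
  - apply prv_orI1. apply prv_impE with A2; [apply HA, incl_cons2| apply ax_hd].
  - apply prv_orI2. apply prv_impE with B2; [apply HB, incl_cons2| apply ax_hd].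
Qed.

Lemma mono_imp d G A1 A2 B1 B2 :
  (forall G', incl G G' -> prv G' (imp_dir (negb d) A1 A2)) ->
  (forall G', incl G G' -> prv G' (imp_dir d B1 B2)) ->
  prv G (imp_dir d (FImp A1 B1) (FImp A2 B2)).
Proof.
  intros HA HB; destruct d; simpl in *; apply prv_impI; apply prv_impI.
  - apply prv_impE with B1; [apply HB, incl_cons2|].
    apply prv_impE with A1; [apply prv_ax; right; left; auto|].
    apply prv_impE with A2; [apply HA, incl_cons2| apply ax_hd].
  - apply prv_impE with B2; [apply HB, incl_cons2|].
    apply prv_impE with A2; [apply prv_ax; right; left; auto|].
    apply prv_impE with A1; [apply HA, incl_cons2| apply ax_hd].
Qed.

Lemma T_good cs F0 q x s c0 X pol G : qf X -> incl (preds X) (preds F0) -> incl (consts X) cs ->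
  s x = TVar x -> okx cs F0 x G -> good q x pol X ->
  prv G (imp_dir (dir q pol) (ssubst (upd s x (TConst c0)) X) (ssubst s X)).
Proof.
  intros Hq Hp Hc Hx Hok Hg.
  assert (Top : simp (kill x X) = FTop -> prv G (imp_dir true (ssubst (upd s x (TConst c0)) X) (ssubst s X))).
  { intros H. simpl. apply prv_impI. apply (K cs F0 x s X); auto.
    eapply okx_incl; [exact Hok| apply incl_cons_r]. }
  assert (Bot : simp (kill x X) = FBot -> prv G (imp_dir false (ssubst (upd s x (TConst c0)) X) (ssubst s X))).
  { intros H. simpl. apply prv_impI. apply prv_botE. apply prv_impE with (ssubst s X); [|apply ax_hd].
    apply (K cs F0 x s X); auto. eapply okx_incl; [exact Hok| apply incl_cons_r]. }
  destruct q, pol; simpl in Hg; unfold pos_weak, neg_weak in Hg; simpl; auto.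
Qed.

Lemma T cs F0 q x s c0 X : qf X -> incl (preds X) (preds F0) -> incl (consts X) cs ->
  s x = TVar x -> forall pol G, okx cs F0 x G -> wcov q x pol X ->
  prv G (imp_dir (dir q pol) (ssubst (upd s x (TConst c0)) X) (ssubst s X)).
Proof.
  intros Hq Hp Hc Hx. induction X; intros pol G Hok Hw;
    (destruct Hw as [Hg|Hw]; [eapply T_good; eauto|]); simpl in Hq.
  - apply imp_dir_refl.
  - rewrite (ssubst_ext_occ (upd s x (TConst c0)) s). apply imp_dir_refl.
    intros y Hy. unfold upd. destruct (y =? x) eqn:E; auto. apply Nat.eqb_eq in E; subst; congruence.
  - rewrite (ssubst_ext_occ (upd s x (TConst c0)) s). apply imp_dir_refl.
    intros y Hy. unfold upd. destruct (y =? x) eqn:E; auto. apply Nat.eqb_eq in E; subst; congruence.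
  - destruct Hq as [Q1 Q2]; destruct Hw as [W1 W2]. simpl. apply mono_and; intros G' HG'.
    + apply IHX1; auto. intros a Ha; apply Hp; simpl; apply in_app_iff; auto.
      intros a Ha; apply Hc; simpl; apply in_app_iff; auto. eapply okx_incl; eauto.
    + apply IHX2; auto. intros a Ha; apply Hp; simpl; apply in_app_iff; auto.
      intros a Ha; apply Hc; simpl; apply in_app_iff; auto. eapply okx_incl; eauto.
  - destruct Hq as [Q1 Q2]; destruct Hw as [W1 W2]. simpl. apply mono_or; intros G' HG'.
    + apply IHX1; auto. intros a Ha; apply Hp; simpl; apply in_app_iff; auto.
      intros a Ha; apply Hc; simpl; apply in_app_iff; auto. eapply okx_incl; eauto.
    + apply IHX2; auto. intros a Ha; apply Hp; simpl; apply in_app_iff; auto.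
      intros a Ha; apply Hc; simpl; apply in_app_iff; auto. eapply okx_incl; eauto.
  - destruct Hq as [Q1 Q2]; destruct Hw as [W1 W2]. simpl. apply mono_imp; intros G' HG'.
    + replace (negb (dir q pol)) with (dir q (negb pol)) by (destruct q; auto).
      apply IHX1; auto. intros a Ha; apply Hp; simpl; apply in_app_iff; auto.
      intros a Ha; apply Hc; simpl; apply in_app_iff; auto. eapply okx_incl; eauto.
    + apply IHX2; auto. intros a Ha; apply Hp; simpl; apply in_app_iff; auto.
      intros a Ha; apply Hc; simpl; apply in_app_iff; auto. eapply okx_incl; eauto.
  - contradiction.
  - contradiction.
Qed.

Definition frs (qs : list (quant * nat)) G := forall z B, In z (map snd qs) -> In B G -> freeb z B = false.

Lemma frs_cons qs A G : (forall z, In z (map snd qs) -> freeb z A = false) -> frs qs G -> frs qs (A :: G).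
Proof. intros H1 H2 z B Hz [<-|HB]; auto. Qed.

Lemma frs_app qs E G : frs qs E -> frs qs G -> frs qs (E ++ G).
Proof. intros H1 H2 z B Hz HB. apply in_app_iff in HB as [HB|HB]; auto. Qed.

Lemma frs_xneg (qs : list (quant * nat)) x E : ~ In x (map snd qs) -> Forall (xneg x) E -> frs qs E.
Proof.
  intros Hx HE z B Hz HB. rewrite Forall_forall in HE. destruct (HE B HB) as [c ->].
  simpl. rewrite !orb_false_r. apply Nat.eqb_neq. intro; subst; auto.
Qed.

Lemma fr_eqx (qs : list (quant * nat)) x c z : ~ In x (map snd qs) -> In z (map snd qs) -> freeb z (FEq (TVar x) (TConst c)) = false.
Proof. intros Hx Hz. simpl. rewrite orb_false_r. apply Nat.eqb_neq. intro; subst; auto. Qed.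

Lemma main cs F0 M : qf M -> cs <> [] -> incl (consts M) cs -> incl (preds M) (preds F0) ->
  forall qs s G, NoDup (map snd qs) -> (forall q x, In (q, x) qs -> wcov q x true M) ->
  (forall x, In x (map snd qs) -> s x = TVar x) -> sok s -> In (SPP cs F0) G -> frs qs G ->
  prv G (FIff (ground cs qs (ssubst s M)) (prenex qs (ssubst s M))).
Proof.
  intros HM Hcs Hc Hp. induction qs as [|[q x] qs IH]; intros s G Hnd Hw Hs Hsok HG Hfr.
  - simpl. apply iff_refl'.
  - simpl in Hnd. inversion Hnd as [|? ? Hxn Hnd']; subst.
    assert (Hsx : s x = TVar x) by (apply Hs; simpl; auto).
    assert (HqM : qf (ssubst s M)) by (apply qf_ssubst; auto).
    assert (E : forall c, subst x (TConst c) (ssubst s M) = ssubst (upd s x (TConst c)) M)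
      by (intros; apply ssubst_subst_upd; auto).
    assert (EP : forall c, subst x (TConst c) (prenex qs (ssubst s M)) =
                           prenex qs (ssubst (upd s x (TConst c)) M))
      by (intros; rewrite subst_prenex, E; auto).
    assert (IHc : forall c G', In (SPP cs F0) G' -> frs qs G' ->
      prv G' (FIff (ground cs qs (ssubst (upd s x (TConst c)) M)) (prenex qs (ssubst (upd s x (TConst c)) M)))).
    { intros c G' H1 H2. apply IH; auto.
      - intros q' x' H; apply (Hw q'); simpl; auto.
      - intros x' Hx'. unfold upd. destruct (x' =? x) eqn:E'.
        + apply Nat.eqb_eq in E'; subst; contradiction.
        + apply Hs; simpl; auto.
      - apply sok_upd; auto. }
    assert (Hc0 : exists c0, In c0 cs) by (destruct cs; [congruence| eexists; left; eauto]).
    destruct Hc0 as [c0 Hc0].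
    assert (HPfr : forall z, In z (map snd qs) -> freeb z (prenex qs (ssubst s M)) = false)
      by (intros; apply freeb_prenex; auto).
    assert (HxP : substitutable (TVar x) x (prenex qs (ssubst s M))).
    { apply subst_ok_prenex; auto. intros z Hz. simpl. apply Nat.eqb_neq. intro; subst; auto. }
    set (P := prenex qs (ssubst s M)) in *.
    set (Gs := map (fun c => ground cs qs (ssubst (upd s x (TConst c)) M)) cs).
    assert (HgEq : map (fun c => ground cs qs (subst x (TConst c) (ssubst s M))) cs = Gs)
      by (apply map_ext; intros; rewrite E; auto).
    assert (HGsfree : forall z A, (z = x \/ In z (map snd qs)) -> In A Gs -> freeb z A = false).
    { intros z A Hz HA. rewrite <- HgEq in HA. apply in_map_iff in HA as [c [<- _]].
      apply freeb_ground. destruct Hz as [->|Hz]; [left; apply freeb_subst_self | right; auto]. }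
    assert (Tr : forall G', frs qs G' -> okx cs F0 x G' ->
      prv G' (imp_dir (dir q true) (prenex qs (ssubst (upd s x (TConst c0)) M)) P)).
    { intros G' Hf Hok.
      pose proof (fun G'' (HG'' : incl G' G'') =>
        T cs F0 q x s c0 M HM Hp Hc Hsx true G'' (okx_incl _ _ _ _ _ Hok HG'') (Hw q x (or_introl eq_refl))) as HT.
      destruct q; simpl in *; apply lift; auto; apply qf_ssubst; auto. }
    rewrite prenex_cons. destruct q; cbn [ground quantify]; rewrite HgEq.
    +
      apply prv_andI.
      * apply prv_impI. apply prv_allI.
        { intros B [<-|HB]. apply freeb_bigAnd; intros; apply HGsfree with (z := x); auto.
          apply Hfr; simpl; auto. }
        apply (split_cases x P cs).
        -- intros c E0 Hc' HE.
           set (ctx := FEq (TVar x) (TConst c) :: E0 ++ bigAnd Gs :: G).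
           assert (Hf : frs qs ctx).
           { apply frs_cons. intros; apply (fr_eqx qs); auto. apply frs_app. eapply frs_xneg; eauto.
             apply frs_cons. intros; apply freeb_bigAnd; intros; apply HGsfree with (z := z); auto.
             intros z B Hz HB; apply Hfr; simpl; auto. }
           assert (HS : In (SPP cs F0) ctx) by (right; apply in_app_iff; right; right; auto).
           assert (Gc : prv ctx (ground cs qs (ssubst (upd s x (TConst c)) M))).
           { apply (bigAnd_elim _ Gs); [apply in_map_iff; exists c; split; auto|]. apply prv_ax.
             right; apply in_app_iff; right; left; auto. }
           pose proof (prv_impE _ _ _ (prv_andE1 _ _ _ (IHc c ctx HS Hf)) Gc) as Pc.
           rewrite <- EP in Pc.
           assert (Hx := prv_eqsubst ctx x P (TConst c) (TVar x) (subst_ok_const _ _ _) HxP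
                      (eq_sym' _ _ _ (ax_hd _ _)) Pc).
           rewrite subst_id in Hx. exact Hx.
        -- intros E0 HE Hout.
           set (ctx := E0 ++ bigAnd Gs :: G).
           assert (Hf : frs qs ctx).
           { apply frs_app. eapply frs_xneg; eauto.
             apply frs_cons. intros; apply freeb_bigAnd; intros; apply HGsfree with (z := z); auto.
             intros z B Hz HB; apply Hfr; simpl; auto. }
           assert (HS : In (SPP cs F0) ctx) by (apply in_app_iff; right; right; auto).
           assert (Gc : prv ctx (ground cs qs (ssubst (upd s x (TConst c0)) M))).
           { apply (bigAnd_elim _ Gs); [apply in_map_iff; exists c0; split; auto|]. apply prv_ax.
             apply in_app_iff; right; left; auto. }
           pose proof (prv_impE _ _ _ (prv_andE1 _ _ _ (IHc c0 ctx HS Hf)) Gc) as Pc.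
           apply prv_impE with (prenex qs (ssubst (upd s x (TConst c0)) M)); auto.
           apply (Tr ctx Hf). split; auto. intros c Hc'. apply in_app_iff; left; auto.
      * apply prv_impI. apply bigAnd_intro. intros A HA. unfold Gs in HA.
        apply in_map_iff in HA as [c [<- Hc']].
        set (ctx := FAll x P :: G).
        assert (Hf : frs qs ctx).
        { apply frs_cons; auto. intros z Hz; simpl. rewrite HPfr; auto. apply andb_false_r.
          intros z B Hz HB; apply Hfr; simpl; auto. }
        assert (HS : In (SPP cs F0) ctx) by (right; auto).
        pose proof (prv_allE ctx x P (TConst c) (subst_ok_const _ _ _) (ax_hd _ _)) as Pc.
        unfold P in Pc. rewrite EP in Pc.
        exact (prv_impE _ _ _ (prv_andE2 _ _ _ (IHc c ctx HS Hf)) Pc).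
    +
      apply prv_andI.
      * apply prv_impI. apply (bigOr_elim _ Gs); [apply ax_hd|].
        intros A E0 HA HE. unfold Gs in HA. apply in_map_iff in HA as [c [<- Hc']].
        set (ctx := ground cs qs (ssubst (upd s x (TConst c)) M) :: E0 ++ bigOr Gs :: G).
        assert (Hf : frs qs ctx).
        { apply frs_cons. intros z Hz. apply HGsfree with (z := z); auto. apply in_map_iff; exists c; split; auto.
          apply frs_app.
          - intros z B Hz HB. rewrite Forall_forall in HE. destruct (HE B HB) as [l' [-> Hl']].
            apply freeb_bigOr. intros; apply HGsfree with (z := z); auto.
          - apply frs_cons. intros; apply freeb_bigOr; intros; apply HGsfree with (z := z); auto.
            intros z B Hz HB; apply Hfr; simpl; auto. }
        assert (HS : In (SPP cs F0) ctx) by (right; apply in_app_iff; right; right; auto).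
        apply prv_exI with (TConst c). apply subst_ok_const.
        unfold P. rewrite EP.
        exact (prv_impE _ _ _ (prv_andE1 _ _ _ (IHc c ctx HS Hf)) (ax_hd _ _)).
      * apply prv_impI. apply prv_exE with x P.
        { intros B [<-|HB]; simpl. rewrite Nat.eqb_refl; auto. apply Hfr; simpl; auto. }
        { apply freeb_bigOr. intros; apply HGsfree with (z := x); auto. }
        { apply ax_hd. }
        apply (split_cases x _ cs).
        -- intros c E0 Hc' HE.
           set (ctx := FEq (TVar x) (TConst c) :: E0 ++ P :: FEx x P :: G).
           assert (Hf : frs qs ctx).
           { apply frs_cons. intros; apply (fr_eqx qs); auto. apply frs_app. eapply frs_xneg; eauto.
             apply frs_cons; auto. apply frs_cons. intros z Hz; simpl; rewrite HPfr; auto.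
             apply andb_false_r. intros z B Hz HB; apply Hfr; simpl; auto. }
           assert (HS : In (SPP cs F0) ctx) by (right; apply in_app_iff; right; right; right; auto).
           assert (HPc : prv ctx P) by (apply prv_ax; right; apply in_app_iff; right; left; auto).
           rewrite <- (subst_id x P) in HPc.
           pose proof (prv_eqsubst ctx x P (TVar x) (TConst c) HxP (subst_ok_const _ _ _)
                      (ax_hd _ _) HPc) as Pc.
           unfold P in Pc. rewrite EP in Pc.
           pose proof (prv_impE _ _ _ (prv_andE2 _ _ _ (IHc c ctx HS Hf)) Pc) as Gc.
           eapply bigOr_intro; [|exact Gc]. unfold Gs. apply in_map_iff; exists c; split; auto.
        -- intros E0 HE Hout.
           set (ctx := E0 ++ P :: FEx x P :: G).
           assert (Hf : frs qs ctx).
           { apply frs_app. eapply frs_xneg; eauto.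
             apply frs_cons; auto. apply frs_cons. intros z Hz; simpl; rewrite HPfr; auto.
             apply andb_false_r. intros z B Hz HB; apply Hfr; simpl; auto. }
           assert (HS : In (SPP cs F0) ctx) by (apply in_app_iff; right; right; right; auto).
           assert (HPc : prv ctx P) by (apply prv_ax; apply in_app_iff; right; left; auto).
           assert (Pc := prv_impE _ _ _ (Tr ctx Hf (conj HS (fun c Hc' => proj2 (in_app_iff _ _ _) (or_introl (Hout c Hc'))))) HPc).
           pose proof (prv_impE _ _ _ (prv_andE2 _ _ _ (IHc c0 ctx HS Hf)) Pc) as Gc.
           eapply bigOr_intro; [|exact Gc]. unfold Gs. apply in_map_iff; exists c0; split; auto.
Qed.

Lemma consts_prenex qs M : consts (prenex qs M) = consts M.
Proof. induction qs as [|[[|] x] qs IH]; simpl; auto. Qed.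

Lemma preds_prenex qs M : preds (prenex qs M) = preds M.
Proof. induction qs as [|[[|] x] qs IH]; simpl; auto. Qed.

Theorem proposition2 (qs : list (quant * nat)) (M : form) (cs : list nat) :
  safe qs M ->
  cs <> [] -> NoDup cs ->
  (forall c, In c (consts (prenex qs M)) -> In c cs) ->
  prv [SPP cs (prenex qs M)] (FIff (ground cs qs M) (prenex qs M)).
Proof.
  intros [[Hqf [Hnd _]] [_ Hw]] Hcs _ Hc.
  rewrite consts_prenex in Hc.
  pose proof (main cs (prenex qs M) M Hqf Hcs Hc) as H.
  rewrite preds_prenex in H.
  specialize (H (fun a Ha => Ha) qs TVar [SPP cs (prenex qs M)] Hnd Hw).
  rewrite ssubst_id in H. apply H.
  - auto.
  - intros y; left; auto.
  - left; auto.
  - intros z B _ [<-|[]]. apply SPP_closed.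
Qed.
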